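(* Let $012345$ be a convex hexagon with area $A$. Suppose that all six vertex triangles (the triangles with vertices $i-1,i,i+1$, indices mod $6$) have the same area $k$, and that the triangle $013$ has area $\lambda k$. Then $$(\lambda-1)A^2-(\lambda^2+4\lambda-4)kA+2(\lambda^2+2\lambda-2)k^2=0,$$ or equivalently $$A=\frac{\lambda^2+2\lambda-2}{\lambda-1}\,k.$$
   Context: The vertices of the hexagon are labelled $0,\dots,5$ in cyclic order. *)

(* Defs.v *)
From mathcomp Require Import all_boot all_order all_algebra.
Set Implicit Arguments. Unset Strict Implicit. Unset Printing Implicit Defensive.
Import Order.TTheory GRing.Theory Num.Theory.
Local Open Scope ring_scope.

(* Twice the signed area of triangle abc (positive iff a,b,c counterclockwise). *)
Definition orient {R : realFieldType} (a b c : R * R) : R :=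
  (b.1 - a.1) * (c.2 - a.2) - (b.2 - a.2) * (c.1 - a.1).

Definition tri_area {R : realFieldType} (a b c : R * R) : R := `|orient a b c| / 2.

(* Area of the polygon with vertices p 0, ..., p (n-1) (shoelace formula);
   equals the usual area when the polygon is simple (e.g. convex). *)
Definition poly_area {R : realFieldType} {n : nat} (p : 'I_n.+1 -> R * R) : R :=
  `| \sum_(i < n.+1) ((p i).1 * (p (ordS i)).2 - (p (ordS i)).1 * (p i).2) | / 2.

(* Strict convexity of a polygon whose vertices are listed in cyclic order:
   every three vertices, taken in the cyclic order, are all counterclockwise
   or all clockwise. *)
Definition convex_polygon {R : realFieldType} {n : nat} (p : 'I_n -> R * R) : Prop :=
  (forall i j l : 'I_n, (i < j)%N -> (j < l)%N -> 0 < orient (p i) (p j) (p l)) \/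
  (forall i j l : 'I_n, (i < j)%N -> (j < l)%N -> orient (p i) (p j) (p l) < 0).

(* Main.v *)
Require Import Defs.
From mathcomp Require Import all_boot all_order all_algebra.
From mathcomp Require Import ring lra zify.
Import Order.TTheory GRing.Theory Num.Theory.
Local Open Scope ring_scope.

Definition br {R : realFieldType} (u v : R * R) : R := u.1 * v.2 - u.2 * v.1.
Definition sb {R : realFieldType} (u v : R * R) : R * R := (u.1 - v.1, u.2 - v.2).

Lemma absl (R : realFieldType) (c D a0 a1 a2 a3 a4 a5 b0 b1 b2 b3 b4 b5 S : R) :
  a0 = c -> b0 = 0 -> a1 = 0 -> b1 = c -> b2 = D ->
  a0+a1+a2+a3+a4+a5 = 0 -> b0+b1+b2+b3+b4+b5 = 0 ->
  a1*b2 - a2*b1 = c^+2 -> a2*b3-a3*b2 = c^+2 -> a3*b4 - a4*b3 = c^+2 ->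
  a4*b5-a5*b4 = c^+2 -> a5*b0 - a0*b5 = c^+2 ->
  0 < c -> 0 < c + D -> 0 < c - a3 ->
  S = (a0*b1 - a1*b0) + (a0*b2 - a2*b0) + (a0*b3 - a3*b0) + (a0*b4 - a4*b0) + (a0*b5 - a5*b0)
    + (a1*b2 - a2*b1) + (a1*b3 - a3*b1) + (a1*b4 - a4*b1) + (a1*b5 - a5*b1)
    + (a2*b3 - a3*b2) + (a2*b4 - a4*b2) + (a2*b5 - a5*b2)
    + (a3*b4 - a4*b3) + (a3*b5 - a5*b3) + (a4*b5 - a5*b4) ->
  D * S = c * (D^+2 + 4*D*c + c^+2).
Proof.
move=> -> -> -> -> -> sa sb E12 E23 E34 E45 E50 hc hcD hc3 ->.
have c0 : c != 0 by rewrite gt_eqF.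
have ha2 : a2 = -c.
  have e : c * (a2 + c) = c^+2 - (0 * D - a2 * c) by ring.
  rewrite E12 subrr in e; move/eqP: e; rewrite mulf_eq0 (negbTE c0) /= addr_eq0.
  by move/eqP.
have hb5 : b5 = -c.
  have e : c * (b5 + c) = c^+2 - (a5 * 0 - c * b5) by ring.
  rewrite E50 subrr in e; move/eqP: e; rewrite mulf_eq0 (negbTE c0) /= addr_eq0.
  by move/eqP.
subst a2 b5.
have ha4 : a4 = - a3 - a5 by lra.
have hb4 : b4 = - D - b3 by lra.
subst a4 b4.
have ha5 : a5 = - a3.
  have e : (a3 + a5) * (c + D) = ((- a3 - a5) * - c - a5 * (- D - b3) - c^+2)
           - (a3 * (- D - b3) - (- a3 - a5) * b3 - c^+2) by ring.
  rewrite E34 E45 !subrr in e; move/eqP: e.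
  by rewrite mulf_eq0 (gt_eqF hcD) orbF addr_eq0 => /eqP ->; rewrite opprK.
subst a5.
have h3 : a3 * D + c^+2 = 0.
  have e : (a3 - c) * (a3 * D + c^+2) = c * (a3 * (- D - b3) - (- a3 - - a3) * b3 - c^+2)
       - a3 * (- c * b3 - a3 * D - c^+2) by ring.
  have {}e : (a3 - c) * (a3 * D + c^+2) = 0 by rewrite e E34 E23; ring.
  move/eqP: e.
  have n3 : a3 - c < 0 by lra.
  by rewrite mulf_eq0 (negbTE (ltr0_neq0 n3)) /= => /eqP.
have hb3 : b3 = 0.
  have e : c * b3 = - (- c * b3 - a3 * D - c^+2) - (a3 * D + c^+2) by ring.
  have {}e : c * b3 = 0 by rewrite e E23 h3; ring.
  move/eqP: e.
  by rewrite mulf_eq0 (negbTE c0) /= => /eqP.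
subst b3.
apply/eqP; rewrite -subr_eq0; apply/eqP.
transitivity (- (c + 2 * D) * (a3 * D + c^+2)); first by ring.
by rewrite h3 mulr0.
Qed.

Lemma conc (R : realFieldType) (P0 P1 P2 P3 P4 P5 : R * R) (c : R) :
  orient P0 P1 P2 = c -> orient P1 P2 P3 = c -> orient P2 P3 P4 = c ->
  orient P3 P4 P5 = c -> orient P4 P5 P0 = c -> orient P5 P0 P1 = c ->
  0 < c -> 0 < orient P0 P1 P3 -> 0 < orient P1 P2 P4 ->
  (orient P0 P1 P3 - c) *
   ((P0.1 * P1.2 - P1.1 * P0.2) + (P1.1 * P2.2 - P2.1 * P1.2) + (P2.1 * P3.2 - P3.1 * P2.2)
  + (P3.1 * P4.2 - P4.1 * P3.2) + (P4.1 * P5.2 - P5.1 * P4.2) + (P5.1 * P0.2 - P0.1 * P5.2))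
  = (orient P0 P1 P3 - c) ^+ 2 + 4 * (orient P0 P1 P3 - c) * c + c ^+ 2.
Proof.
move=> h0 h1 h2 h3 h4 h5 hc hL h124.
set e0 := sb P1 P0. set e1 := sb P2 P1. set e2 := sb P3 P2.
set e3 := sb P4 P3. set e4 := sb P5 P4. set e5 := sb P0 P5.
set L := orient P0 P1 P3.
set S := (X in (L - c) * X).
have K : (L - c) * (c * S) = c * ((L - c)^+2 + 4 * (L - c) * c + c^+2).
  apply: (@absl R c (L - c) (br e0 e1) (br e1 e1) (br e2 e1) (br e3 e1) (br e4 e1) (br e5 e1)
  (br e0 e0) (br e0 e1) (br e0 e2) (br e0 e3) (br e0 e4) (br e0 e5) (c * S)).
  - by rewrite -h0 /e0 /e1 /br /sb /orient /=; ring.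
  - by rewrite /e0 /br /sb /=; ring.
  - by rewrite /e1 /br /sb /=; ring.
  - by rewrite -h0 /e0 /e1 /br /sb /orient /=; ring.
  - by rewrite -h0 /L /e0 /e2 /br /sb /orient /=; ring.
  - by rewrite /e0 /e1 /e2 /e3 /e4 /e5 /br /sb /=; ring.
  - by rewrite /e0 /e1 /e2 /e3 /e4 /e5 /br /sb /=; ring.
  - by rewrite expr2 -{1}h0 -h1 /e0 /e1 /e2 /e3 /e4 /e5 /br /sb /orient /=; ring.
  - by rewrite expr2 -{1}h0 -h2 /e0 /e1 /e2 /e3 /e4 /e5 /br /sb /orient /=; ring.
  - by rewrite expr2 -{1}h0 -h3 /e0 /e1 /e2 /e3 /e4 /e5 /br /sb /orient /=; ring.
  - by rewrite expr2 -{1}h0 -h4 /e0 /e1 /e2 /e3 /e4 /e5 /br /sb /orient /=; ring.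
  - by rewrite expr2 -{1}h0 -h5 /e0 /e1 /e2 /e3 /e4 /e5 /br /sb /orient /=; ring.
  - by [].
  - by rewrite addrC subrK.
  - suff -> : c - br e3 e1 = orient P1 P2 P4 by [].
    by rewrite -h1 /e1 /e3 /br /sb /orient /=; ring.
  - by rewrite -h0 /S /e0 /e1 /e2 /e3 /e4 /e5 /br /sb /orient /=; ring.
have c0 : c != 0 by rewrite gt_eqF.
apply: (mulfI c0); rewrite -K; ring.
Qed.

Lemma ta (R : realFieldType) (a b c : R * R) : 0 < orient a b c -> tri_area a b c = orient a b c / 2.
Proof. by move=> h; rewrite /tri_area gtr0_norm. Qed.

Lemma main_ccw (R : realFieldType) (p : 'I_6 -> R * R) (A k lambda : R) :
  (forall i j l : 'I_6, (i < j)%N -> (j < l)%N -> 0 < orient (p i) (p j) (p l)) ->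
  A = poly_area p ->
  (forall i : 'I_6, tri_area (p (ord_pred i)) (p i) (p (ordS i)) = k) ->
  tri_area (p (inord 0)) (p (inord 1)) (p (inord 3)) = lambda * k ->
  (lambda - 1) * A ^+ 2 - (lambda ^+ 2 + 4 * lambda - 4) * k * A
    + 2 * (lambda ^+ 2 + 2 * lambda - 2) * k ^+ 2 = 0
  /\ lambda != 1
  /\ A = (lambda ^+ 2 + 2 * lambda - 2) / (lambda - 1) * k.
Proof.
move=> Hc HA H HL.
pose P n := p (inord n).
have pP : forall i : 'I_6, p i = P i by move=> i; rewrite /P inord_val.
have O : forall i j l : nat, (i < j)%N -> (j < l)%N -> (l < 6)%N -> 0 < orient (P i) (P j) (P l).
  move=> i j l hij hjl hl; apply: Hc; rewrite !inordK //; lia.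
have m1 : (1 %% 6 = 1)%N by []. have m2 : (2 %% 6 = 2)%N by [].
have m3 : (3 %% 6 = 3)%N by []. have m4 : (4 %% 6 = 4)%N by [].
have m5 : (5 %% 6 = 5)%N by []. have m6 : (6 %% 6 = 0)%N by [].
have m7 : ((0 + 6) %% 6 = 0)%N by []. have m8 : ((1 + 6) %% 6 = 1)%N by [].
have m9 : ((2 + 6) %% 6 = 2)%N by []. have m10 : ((3 + 6) %% 6 = 3)%N by [].
have m11 : ((4 + 6) %% 6 = 4)%N by [].
have h0 := H (inord 0). have h1 := H (inord 1). have h2 := H (inord 2).
have h3 := H (inord 3). have h4 := H (inord 4). have h5 := H (inord 5).
rewrite !pP /= !inordK // ?(m1, m2, m3, m4, m5, m6, m7, m8, m9, m10, m11) in h0 h1 h2 h3 h4 h5.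
have o012 : 0 < orient (P 0) (P 1) (P 2) by apply: O.
have o123 : 0 < orient (P 1) (P 2) (P 3) by apply: O.
have o234 : 0 < orient (P 2) (P 3) (P 4) by apply: O.
have o345 : 0 < orient (P 3) (P 4) (P 5) by apply: O.
have o023 : 0 < orient (P 0) (P 2) (P 3) by apply: O.
have o034 : 0 < orient (P 0) (P 3) (P 4) by apply: O.
have o045 : 0 < orient (P 0) (P 4) (P 5) by apply: O.
have o015 : 0 < orient (P 0) (P 1) (P 5) by apply: O.
have o013 : 0 < orient (P 0) (P 1) (P 3) by apply: O.
have o124 : 0 < orient (P 1) (P 2) (P 4) by apply: O.
have c450 : orient (P 4) (P 5) (P 0) = orient (P 0) (P 4) (P 5) by rewrite /orient; ring.
have c501 : orient (P 5) (P 0) (P 1) = orient (P 0) (P 1) (P 5) by rewrite /orient; ring.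
rewrite ta in h0; last by rewrite c501.
rewrite ta in h5; last by rewrite c450.
rewrite ta // in h1. rewrite ta // in h2. rewrite ta // in h3. rewrite ta // in h4.
rewrite ta // in HL.
have HS : poly_area p = `| (P 0).1 * (P 1).2 - (P 1).1 * (P 0).2 + ((P 1).1 * (P 2).2 - (P 2).1 * (P 1).2) + ((P 2).1 * (P 3).2 - (P 3).1 * (P 2).2)
  + ((P 3).1 * (P 4).2 - (P 4).1 * (P 3).2) + ((P 4).1 * (P 5).2 - (P 5).1 * (P 4).2) + ((P 5).1 * (P 0).2 - (P 0).1 * (P 5).2) | / 2.
  rewrite /poly_area !big_ord_recl big_ord0 !pP /= ?(m1, m2, m3, m4, m5, m6).
  by rewrite /bump /=; congr (`|_| / _); ring.
rewrite HS in HA.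
set S := (X in `|X|) in HA.
have eS : S = orient (P 0) (P 1) (P 2) + orient (P 0) (P 2) (P 3) + orient (P 0) (P 3) (P 4) + orient (P 0) (P 4) (P 5).
  by rewrite /S /orient; ring.
have Sp : 0 < S by rewrite eS; lra.
rewrite gtr0_norm // in HA.
have K := @conc R (P 0) (P 1) (P 2) (P 3) (P 4) (P 5) (orient (P 0) (P 1) (P 2)) erefl.
have {}K := K ltac:(lra) ltac:(lra) ltac:(lra) ltac:(lra) ltac:(lra) o012 o013 o124.
rewrite -/S in K.
have ec : orient (P 0) (P 1) (P 2) = 2 * k by lra.
have eL : orient (P 0) (P 1) (P 3) = 2 * lambda * k by lra.
have eA : S = 2 * A by lra.
have kp : 0 < k by lra.
rewrite ec eL eA in K.
have E : (lambda - 1) * A = k * (lambda ^+ 2 + 2 * lambda - 2).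
  have E4 : (4 * k) * ((lambda - 1) * A - k * (lambda ^+ 2 + 2 * lambda - 2)) = 0.
    transitivity ((2 * lambda * k - 2 * k) * (2 * A) - ((2 * lambda * k - 2 * k) ^+ 2 + 4 * (2 * lambda * k - 2 * k) * (2 * k) + (2 * k) ^+ 2)); first by ring.
    by rewrite K subrr.
  move/eqP: E4; rewrite mulf_eq0 (gt_eqF (_ : 0 < 4 * k)) ?subr_eq0 /=; last by lra.
  by move/eqP.
have l1 : lambda != 1.
  apply/eqP => l1; move: E; rewrite l1 subrr mul0r => /esym /eqP.
  rewrite mulf_eq0 (gt_eqF kp) /=; apply/negP.
  have -> : (1 : R) ^+ 2 + 2 * 1 - 2 = 1 by ring.
  exact: oner_neq0.
split; last split => //.
  transitivity (((lambda - 1) * A - k * (lambda ^+ 2 + 2 * lambda - 2)) * (A - 2 * k)); first by ring.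
  by rewrite E subrr mul0r.
have l1' : lambda - 1 != 0 by rewrite subr_eq0.
apply: (mulfI l1'); rewrite E; field; exact: l1'.
Qed.

Theorem corollary4 (R : realFieldType) (p : 'I_6 -> R * R) (A k lambda : R) :
  convex_polygon p ->
  A = poly_area p ->
  (forall i : 'I_6, tri_area (p (ord_pred i)) (p i) (p (ordS i)) = k) ->
  tri_area (p (inord 0)) (p (inord 1)) (p (inord 3)) = lambda * k ->
  (lambda - 1) * A ^+ 2 - (lambda ^+ 2 + 4 * lambda - 4) * k * A
    + 2 * (lambda ^+ 2 + 2 * lambda - 2) * k ^+ 2 = 0
  /\ lambda != 1
  /\ A = (lambda ^+ 2 + 2 * lambda - 2) / (lambda - 1) * k.
Proof.
case=> [Hc|Hc] HA H HL.
  exact: (@main_ccw R p A k lambda Hc HA H HL).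
pose q i := ((p i).1, - (p i).2).
have oq : forall a b c : 'I_6, orient (q a) (q b) (q c) = - orient (p a) (p b) (p c).
  by move=> a b c; rewrite /orient /q /=; ring.
have tq : forall a b c : 'I_6, tri_area (q a) (q b) (q c) = tri_area (p a) (p b) (p c).
  by move=> a b c; rewrite /tri_area oq normrN.
apply: (@main_ccw R q A k lambda).
- by move=> i j l hij hjl; rewrite oq oppr_gt0; exact: Hc.
- rewrite HA /poly_area [in RHS]/q -[in RHS]normrN -sumrN.
  congr (`|_| / 2); apply: eq_bigr => i _ /=; ring.
- by move=> i; rewrite tq.
- by rewrite tq.
Qed.
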